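(* Let $n\ge q\ge 2$ be integers and put $S_1=\sqrt{q^2+4(q-1)(n-2)}$. Let $d$ be an integer and define $j$ by $d=n-1-\frac{n-2+j}{q}$, with $j\in\left[0,\frac{S_1-q}{2}\right)$. Put $s=1-\frac{2d}{n}$, $d_0=n-\frac{j(n-1)}{q(j+q-1)}$, let $e$ be the unique rational number in $(0,1]$ with $d_0+e\in\mathbb{Z}$, and let $$f(t)=\Big(t+1+\tfrac{2e}{n}-\tfrac{2j(n-1)}{nq(j+q-1)}\Big)\Big(t+1+\tfrac{2(e-1)}{n}-\tfrac{2j(n-1)}{nq(j+q-1)}\Big)(t-s)=\sum_{i=0}^3 f_iQ_i^{(n,q)}(t).$$ Let $(\mu_d^*,\mu_{d_0+e-1}^*,\mu_{d_0+e}^* )$ be the unique solution of the linear system $$\mu_d^*\frac{K_l^{(n,q)}(d)}{r_l}+\mu_{d_0+e-1}^*\frac{K_l^{(n,q)}(d_0+e-1)}{r_l}+\mu_{d_0+e}^*\frac{K_l^{(n,q)}(d_0+e)}{r_l}=-1,\qquad l=1,2,3,$$ and for $i=4,5,\dots,n$ set $$\lambda_i^*=1+\mu_d^*\frac{K_i^{(n,q)}(d)}{r_i}+\mu_{d_0+e-1}^*\frac{K_i^{(n,q)}(d_0+e-1)}{r_i}+\mu_{d_0+e}^*\frac{K_i^{(n,q)}(d_0+e)}{r_i}.$$ If $\lambda_i^*\ge 0$ for every integer $i\in[4,n]$, then the bound $A_q(n,s)\le f(1)/f_0$ is the best bound obtainable by the linear programming method: for every real polynomial $h(t)=\sum_{i=0}^{m}h_iQ_i^{(n,q)}(t)$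 of degree $m\le n$ with $h_0>0$, $h_i\ge 0$ for all $i$, and $h(t)\le 0$ for all $t\in T_n\cap[-1,s]$, one has $h(1)/h_0\ge f(1)/f_0$.
   Context: $K_i^{(n,q)}(z)=\sum_{l=0}^{i}(-1)^l(q-1)^{i-l}\binom{z}{l}\binom{n-z}{i-l}$, $r_i=(q-1)^i\binom{n}{i}$, and $Q_i^{(n,q)}(t)=\frac{1}{r_i}K_i^{(n,q)}\!\big(\tfrac{n(1-t)}{2}\big)$. $T_n=\{-1+\frac{2i}{n}: i=0,1,\dots,n\}$. $A_q(n,s)$ is the maximum size of a code in the $q$-ary Hamming space of length $n$ with all pairwise inner products $1-\frac{2d(x,y)}{n}\le s$; the linear programming (Delsarte) bound states $A_q(n,s)\le h(1)/h_0$ for any $h$ as in the claim. *)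

(* Defs.v *)
From HB Require Import structures.
From mathcomp Require Import all_boot all_order all_algebra.
From mathcomp Require Import reals.
Set Implicit Arguments. Unset Strict Implicit. Unset Printing Implicit Defensive.
Import Order.TTheory GRing.Theory Num.Theory.
Local Open Scope ring_scope.

Section Defs.
Variable R : realType.

Definition gbinom (z : R) (l : nat) : R :=
  (\prod_(k < l) (z - k%:R)) / (l`!)%:R.

Definition kraw (n q i : nat) (z : R) : R :=
  \sum_(l < i.+1) (-1) ^+ l * ((q - 1)%:R) ^+ (i - l)
                  * gbinom z l * gbinom (n%:R - z) (i - l).

Definition rr (n q i : nat) : R := ((q - 1)%:R) ^+ i * ('C(n, i))%:R.

Definition Qpol (n q i : nat) (t : R) : R :=
  kraw n q i (n%:R * (1 - t) / 2) / rr n q i.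

Definition inTn (n : nat) (t : R) : Prop :=
  exists2 i : nat, (i <= n)%N & t = -1 + 2 * i%:R / n%:R.

End Defs.

(* Main.v *)
Require Import Defs.
From HB Require Import structures.
From mathcomp Require Import all_boot all_order all_algebra.
From mathcomp Require Import reals.
From mathcomp Require Import ring lra.
Import Order.TTheory GRing.Theory Num.Theory.
Local Open Scope ring_scope.

Module Helpers.
Set Implicit Arguments. Unset Strict Implicit. Unset Printing Implicit Defensive.
Section H.
Variable R : realType.

Lemma gb0 (z : R) : gbinom z 0 = 1.
Proof. by rewrite /gbinom big_ord0 divr1. Qed.
Lemma gb1 (z : R) : gbinom z 1 = z.
Proof. by rewrite /gbinom big_ord_recr big_ord0 /= mul1r subr0 divr1. Qed.
Lemma gb2 (z : R) : gbinom z 2 = z * (z - 1) / 2.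
Proof. rewrite /gbinom !big_ord_recr big_ord0 /= mul1r subr0. by []. Qed.
Lemma gb3 (z : R) : gbinom z 3 = z * (z - 1) * (z - 2) / 6.
Proof. rewrite /gbinom !big_ord_recr big_ord0 /= mul1r subr0. by []. Qed.
Lemma gb_zero (l : nat) : gbinom (0 : R) l.+1 = 0.
Proof. by rewrite /gbinom big_ord_recl /= subr0 mul0r mul0r. Qed.
Lemma gb_nat (n i : nat) : (i <= n)%N -> gbinom (n%:R : R) i = ('C(n, i))%:R.
Proof.
move=> hi; rewrite /gbinom.
have -> : \prod_(k < i) ((n%:R : R) - k%:R) = (n ^_ i)%:R.
  rewrite ffact_prod natr_prod; apply: eq_bigr => k _.
  by rewrite natrB // ltnW // (leq_trans (ltn_ord k) hi).
by rewrite -bin_ffact natrM mulfK // pnatr_eq0 -lt0n fact_gt0.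
Qed.
Section K.
Variables n q : nat.
Local Notation N := (n%:R : R).
Local Notation Qm := ((q - 1)%:R : R).

Lemma kraw0 z : kraw n q 0 z = 1 :> R.
Proof. by rewrite /kraw big_ord_recr big_ord0 /= !gb0 expr0 !mulr1 add0r. Qed.
Lemma kraw1 (z : R) : kraw n q 1 z = Qm * (N - z) - z.
Proof. rewrite /kraw !big_ord_recr big_ord0 /= !gb0 !gb1. ring. Qed.
Lemma kraw2 (z : R) : kraw n q 2 z =
  Qm ^+ 2 * ((N - z) * (N - z - 1) / 2) - Qm * (z * (N - z)) + z * (z - 1) / 2.
Proof. rewrite /kraw !big_ord_recr big_ord0 /= !gb0 !gb1 !gb2. ring. Qed.
Lemma kraw3 (z : R) : kraw n q 3 z =
  Qm ^+ 3 * ((N - z) * (N - z - 1) * (N - z - 2) / 6)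
  - Qm ^+ 2 * (z * ((N - z) * (N - z - 1) / 2))
  + Qm * (z * (z - 1) / 2 * (N - z))
  - z * (z - 1) * (z - 2) / 6.
Proof. rewrite /kraw !big_ord_recr big_ord0 /= !gb0 !gb1 !gb2 !gb3. ring. Qed.
Lemma kraw_at0 i : (i <= n)%N -> kraw n q i (0 : R) = rr R n q i.
Proof.
move=> hi; rewrite /kraw /rr big_ord_recl /= gb0 subr0 subn0 expr0 mul1r mulr1 (@gb_nat n i hi).
rewrite big1 ?addr0 // => l _. by rewrite /bump /= add1n gb_zero mulr0 mul0r.
Qed.
Lemma rr_neq0 i : (2 <= q)%N -> (i <= n)%N -> rr R n q i != 0.
Proof.
move=> hq hi; rewrite /rr mulf_neq0 // ?expf_neq0 // pnatr_eq0 -lt0n ?bin_gt0 //.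
by rewrite subn_gt0.
Qed.
Lemma rr0 : rr R n q 0 = 1.
Proof. by rewrite /rr expr0 bin0 mul1r. Qed.
Lemma rr1 : rr R n q 1 = Qm * N.
Proof. by rewrite /rr expr1 bin1. Qed.
Lemma rr2 : (2 <= n)%N -> rr R n q 2 = Qm ^+ 2 * (N * (N - 1) / 2).
Proof. by move=> h; rewrite /rr -gb_nat // gb2. Qed.
Lemma rr3 : (3 <= n)%N -> rr R n q 3 = Qm ^+ 3 * (N * (N - 1) * (N - 2) / 6).
Proof. by move=> h; rewrite /rr -gb_nat // gb3. Qed.
End K.

Definition P1f (N Q z : R) := ((Q - 1) * (N - z) - z) / ((Q - 1) * N).
Definition P2f (N Q z : R) :=
  ((Q - 1) ^+ 2 * ((N - z) * (N - z - 1) / 2) - (Q - 1) * (z * (N - z)) + z * (z - 1) / 2)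
  / ((Q - 1) ^+ 2 * (N * (N - 1) / 2)).
Definition P3f (N Q z : R) :=
  ((Q - 1) ^+ 3 * ((N - z) * (N - z - 1) * (N - z - 2) / 6)
  - (Q - 1) ^+ 2 * (z * ((N - z) * (N - z - 1) / 2))
  + (Q - 1) * (z * (z - 1) / 2 * (N - z))
  - z * (z - 1) * (z - 2) / 6) / ((Q - 1) ^+ 3 * (N * (N - 1) * (N - 2) / 6)).
Definition mom1 (N Q : R) := N * ((Q - 1) / Q).
Definition mom2 (N Q : R) := N * (N - 1) * ((Q - 1) / Q) ^+ 2 + N * ((Q - 1) / Q).
Definition mom3 (N Q : R) := N * (N - 1) * (N - 2) * ((Q - 1) / Q) ^+ 3
   + 3 * N * (N - 1) * ((Q - 1) / Q) ^+ 2 + N * ((Q - 1) / Q).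

Lemma lc1 (c a b z w : R) : a = b -> z - w = c * (a - b) -> z = w.
Proof. by move=> -> /eqP; rewrite subrr mulr0 subr_eq0 => /eqP. Qed.
Lemma lc2 (c c' a b a' b' z w : R) : a = b -> a' = b' ->
  z - w = c * (a - b) + c' * (a' - b') -> z = w.
Proof. by move=> -> -> /eqP; rewrite !subrr !mulr0 addr0 subr_eq0 => /eqP. Qed.
Lemma lc3 (c c' c'' a b a' b' a'' b'' z w : R) : a = b -> a' = b' -> a'' = b'' ->
  z - w = c * (a - b) + c' * (a' - b') + c'' * (a'' - b'') -> z = w.
Proof. by move=> -> -> -> /eqP; rewrite !subrr !mulr0 !addr0 subr_eq0 => /eqP. Qed.

Lemma moments (N Q x1 x2 x3 mu1 mu2 mu3 : R) :
  N != 0 -> N - 1 != 0 -> N - 2 != 0 -> Q != 0 -> Q - 1 != 0 ->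
  mu1 * P1f N Q x1 + mu2 * P1f N Q x2 + mu3 * P1f N Q x3 = -1 ->
  mu1 * P2f N Q x1 + mu2 * P2f N Q x2 + mu3 * P2f N Q x3 = -1 ->
  mu1 * P3f N Q x1 + mu2 * P3f N Q x2 + mu3 * P3f N Q x3 = -1 ->
  [/\ mu1 * x1 + mu2 * x2 + mu3 * x3 = mom1 N Q * (1 + mu1 + mu2 + mu3),
      mu1 * x1 ^+ 2 + mu2 * x2 ^+ 2 + mu3 * x3 ^+ 2 = mom2 N Q * (1 + mu1 + mu2 + mu3) &
      mu1 * x1 ^+ 3 + mu2 * x2 ^+ 3 + mu3 * x3 ^+ 3 = mom3 N Q * (1 + mu1 + mu2 + mu3)].
Proof.
move=> hN hN1 hN2 hQ hQ1 H1 H2 H3.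
have S1 : mu1 * x1 + mu2 * x2 + mu3 * x3 = mom1 N Q * (1 + mu1 + mu2 + mu3).
  apply: (@lc1 (- ((Q - 1) * N / Q)) _ _ _ _ H1).
  rewrite /P1f /mom1; field; rewrite ?hN ?hQ ?hQ1 //.
have S2 : mu1 * x1 ^+ 2 + mu2 * x2 ^+ 2 + mu3 * x3 ^+ 2 = mom2 N Q * (1 + mu1 + mu2 + mu3).
  apply: (@lc2 ((Q - 1) ^+ 2 * N * (N - 1) / Q ^+ 2)
                    ((2 * N * (Q - 1) - Q + 2) / Q) _ _ _ _ _ _ H2 S1).
  rewrite /P2f /mom1 /mom2; field; by rewrite hQ hN1 hN hQ1.
split => //.
apply: (@lc3 (- ((Q - 1) ^+ 3 * N * (N - 1) * (N - 2) / Q ^+ 3))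
   (- ((3 * N ^+ 2 * (Q - 1) ^+ 2 - 3 * N * (Q - 1) * (2 * Q - 3) + 2 * (Q ^+ 2 - 3 * Q + 3)) / Q ^+ 2))
   (3 * (N * Q - N - Q + 2) / Q) _ _ _ _ _ _ _ _ H3 S1 S2).
rewrite /P3f /mom1 /mom2 /mom3; field; by rewrite ?hQ ?hN1 ?hN ?hQ1 ?hN2.
Qed.

Definition Ecub (N Q r1 r2 r3 : R) := mom3 N Q - (r1 + r2 + r3) * mom2 N Q
  + (r1 * r2 + r2 * r3 + r1 * r3) * mom1 N Q - r1 * r2 * r3.

Lemma wcub (N Q x1 x2 x3 mu1 mu2 mu3 r1 r2 r3 : R) :
  mu1 * x1 + mu2 * x2 + mu3 * x3 = mom1 N Q * (1 + mu1 + mu2 + mu3) ->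
  mu1 * x1 ^+ 2 + mu2 * x2 ^+ 2 + mu3 * x3 ^+ 2 = mom2 N Q * (1 + mu1 + mu2 + mu3) ->
  mu1 * x1 ^+ 3 + mu2 * x2 ^+ 3 + mu3 * x3 ^+ 3 = mom3 N Q * (1 + mu1 + mu2 + mu3) ->
  (0 - r1) * (0 - r2) * (0 - r3) + mu1 * ((x1 - r1) * (x1 - r2) * (x1 - r3))
  + mu2 * ((x2 - r1) * (x2 - r2) * (x2 - r3)) + mu3 * ((x3 - r1) * (x3 - r2) * (x3 - r3))
  = (1 + mu1 + mu2 + mu3) * Ecub N Q r1 r2 r3.
Proof.
move=> S1 S2 S3.
apply: (@lc3 1 (- (r1 + r2 + r3)) (r1 * r2 + r2 * r3 + r1 * r3) _ _ _ _ _ _ _ _ S3 S2 S1).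
rewrite /Ecub; ring.
Qed.
End H.

Section H.
Variable R : realType.

Definition A0p (N Q j x : R) :=
  (- N ^+ 2 * Q + N ^+ 2 * j + 2 * N * Q * j - N * Q - N * j)
  + (- 2 * N * Q * j + 2 * N * Q - Q ^+ 3 - Q ^+ 2 * j + 2 * Q ^+ 2) * x
  + (Q ^+ 3 + Q ^+ 2 * j - 2 * Q ^+ 2) * x ^+ 2.
Definition Gp (N Q x : R) :=
  Q ^+ 2 * x ^+ 2 - Q * (2 * N + Q - 2) * x + N ^+ 2 + (2 * Q - 3) * N - 2 * (Q - 1).

Lemma A0p_neg (N Q j J a : R) :
  2 <= Q -> Q <= N -> 3 <= N -> 0 <= j -> j ^+ 2 + Q * j < (Q - 1) * (N - 2) ->
  J = j * (N - 1) / (Q * (j + Q - 1)) -> J <= a -> a <= J + 1 ->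
  A0p N Q j a <= 0.
Proof.
move=> hQ hQN hN hj hK hJ hJa haJ.
have hD : 0 < Q * (j + Q - 1) by apply: mulr_gt0; lra.
have hD0 : Q * (j + Q - 1) != 0 by rewrite gt_eqF.
have hQ0 : Q != 0 by rewrite gt_eqF //; lra.
have hjQ : j + Q - 1 != 0 by rewrite gt_eqF //; lra.
set K := j ^+ 2 + Q * j - (Q - 1) * (N - 2).
have hKn : K < 0 by rewrite /K; lra.
have e1 : A0p N Q j (J + 1) * (Q * (j + Q - 1)) ^+ 2 =
   Q ^+ 2 * ((N - 1) * (Q - 1) * (Q + j - 2)) * K
   - 2 * Q ^+ 2 * ((Q - 1) ^+ 2 * (N - 1) * (N + Q + j - 2)).
  by rewrite hJ /A0p /K; field; rewrite hQ0 hjQ.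
set br := N ^+ 2 * (Q - 1) ^+ 2 + N * (Q - 1) * (Q ^+ 2 - 2 * Q + 3)
   + (Q - 1) * (Q ^+ 2 - 3 * Q - 2) + j * (N * (Q - 1) ^+ 2 + Q ^+ 2 - 2 * Q - 1).
have e0 : A0p N Q j J * (Q * (j + Q - 1)) ^+ 2 =
   Q ^+ 2 * ((N + 1) * (Q - 1) * (Q + j - 2) + 2 * j) * K
   + Q ^+ 2 * (- 4 * K - 2 * br).
  by rewrite hJ /A0p /K /br; field; rewrite hQ0 hjQ.
have ebr : 2 * br + 4 * K = 2 * (Q - 1) * (N ^+ 2 * (Q - 1) + N * (Q - 1) ^+ 2 + (Q - 1) * (Q - 2))
   + 2 * j * ((N + 1) * (Q - 1) ^+ 2 - 2) + 4 * j ^+ 2 + 4 * Q * j.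
  by rewrite /br /K; ring.
have hQ1 : 0 <= Q - 1 by lra.
have hQ2 : 0 <= Q - 2 by lra.
have hN1 : 0 <= N - 1 by lra.
have p1 : 0 <= (N - 1) * (Q - 1) * (Q + j - 2) by rewrite !mulr_ge0 //; lra.
have p2 : 0 <= (Q - 1) ^+ 2 * (N - 1) * (N + Q + j - 2) by rewrite !mulr_ge0 ?sqr_ge0 //; lra.
have p3 : 0 <= (N + 1) * (Q - 1) * (Q + j - 2) + 2 * j.
  have : 0 <= (N + 1) * (Q - 1) * (Q + j - 2) by rewrite !mulr_ge0 //; lra.
  lra.
have p4 : 0 <= 2 * br + 4 * K.
  rewrite ebr.
  have a1 : 0 <= N ^+ 2 * (Q - 1) + N * (Q - 1) ^+ 2 + (Q - 1) * (Q - 2).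
    have : 0 <= N ^+ 2 * (Q - 1) by rewrite mulr_ge0 ?sqr_ge0.
    have : 0 <= N * (Q - 1) ^+ 2 by rewrite mulr_ge0 ?sqr_ge0 //; lra.
    have : 0 <= (Q - 1) * (Q - 2) by rewrite mulr_ge0.
    lra.
  have a2 : 0 <= (N + 1) * (Q - 1) ^+ 2 - 2.
    have h1 : 1 <= (Q - 1) ^+ 2.
      by rewrite expr2 -[1](mulr1 1); apply: ler_pM => //; lra.
    have : (N + 1) * 1 <= (N + 1) * (Q - 1) ^+ 2 by rewrite ler_pM2l //; lra.
    lra.
  have : 0 <= 2 * (Q - 1) * (N ^+ 2 * (Q - 1) + N * (Q - 1) ^+ 2 + (Q - 1) * (Q - 2)).
    by rewrite !mulr_ge0.
  have : 0 <= 2 * j * ((N + 1) * (Q - 1) ^+ 2 - 2) by rewrite !mulr_ge0.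
  have : 0 <= j ^+ 2 by rewrite sqr_ge0.
  have : 0 <= Q * j by rewrite mulr_ge0 //; lra.
  lra.
have hQs : 0 < Q ^+ 2 by rewrite exprn_gt0 //; lra.
have n1 : A0p N Q j (J + 1) <= 0.
  have : A0p N Q j (J + 1) * (Q * (j + Q - 1)) ^+ 2 <= 0.
    rewrite e1.
    have : Q ^+ 2 * ((N - 1) * (Q - 1) * (Q + j - 2)) * K <= 0.
      by apply: mulr_ge0_le0; [exact: mulr_ge0 (ltW hQs) p1 | exact: ltW hKn].
    have : 0 <= 2 * Q ^+ 2 * ((Q - 1) ^+ 2 * (N - 1) * (N + Q + j - 2)).
      by apply: mulr_ge0 p2; apply: mulr_ge0 => //; exact: ltW hQs.
    lra.
  by rewrite pmulr_lle0 // exprn_gt0.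
have n0 : A0p N Q j J <= 0.
  have : A0p N Q j J * (Q * (j + Q - 1)) ^+ 2 <= 0.
    rewrite e0.
    have : Q ^+ 2 * ((N + 1) * (Q - 1) * (Q + j - 2) + 2 * j) * K <= 0.
      by apply: mulr_ge0_le0; [exact: mulr_ge0 (ltW hQs) p3 | exact: ltW hKn].
    have : Q ^+ 2 * (- 4 * K - 2 * br) <= 0.
      rewrite pmulr_rle0 //; lra.
    lra.
  by rewrite pmulr_lle0 // exprn_gt0.
have eint : A0p N Q j a = (J + 1 - a) * A0p N Q j J + (a - J) * A0p N Q j (J + 1)
   + Q ^+ 2 * (Q + j - 2) * ((a - J) * (a - J - 1)).
  by rewrite /A0p; ring.
rewrite eint.
have : (J + 1 - a) * A0p N Q j J <= 0 by rewrite mulr_ge0_le0 //; lra.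
have : (a - J) * A0p N Q j (J + 1) <= 0 by rewrite mulr_ge0_le0 //; lra.
have : Q ^+ 2 * (Q + j - 2) * ((a - J) * (a - J - 1)) <= 0.
  rewrite mulr_ge0_le0 //; first by rewrite mulr_ge0 ?sqr_ge0 //; lra.
  rewrite mulr_ge0_le0 //; lra.
lra.
Qed.

Lemma Gp_pos (N Q j J a : R) :
  2 <= Q -> Q <= N -> 3 <= N -> 0 <= j -> j ^+ 2 + Q * j < (Q - 1) * (N - 2) ->
  J = j * (N - 1) / (Q * (j + Q - 1)) -> a <= J + 1 ->
  0 < Gp N Q a.
Proof.
move=> hQ hQN hN hj hK hJ haJ.
have hQ0 : Q != 0 by rewrite gt_eqF //; lra.
have hjQ : j + Q - 1 != 0 by rewrite gt_eqF //; lra.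
have hjQp : 0 < j + Q - 1 by lra.
have hD : 0 < Q * (j + Q - 1) by apply: mulr_gt0; lra.
have eG : Gp N Q (J + 1) * (Q * (j + Q - 1)) ^+ 2 =
   Q ^+ 2 * (Q - 1) * (N - 1) * (j ^+ 2 + (Q - 2) * j + (Q - 1) * (N - 2)).
  by rewrite hJ /Gp; field; rewrite hQ0 hjQ.
have hQs : 0 < Q ^+ 2 by rewrite exprn_gt0 //; lra.
have g1 : 0 < Gp N Q (J + 1).
  have : 0 < Gp N Q (J + 1) * (Q * (j + Q - 1)) ^+ 2.
    rewrite eG; apply: mulr_gt0; first by apply: mulr_gt0; [apply: mulr_gt0 => //|]; lra.
    have : 0 <= j ^+ 2 by rewrite sqr_ge0.
    have : 0 <= (Q - 2) * j by rewrite mulr_ge0 //; lra.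
    have : 0 < (Q - 1) * (N - 2) by rewrite mulr_gt0 //; lra.
    lra.
  by rewrite pmulr_lgt0 // exprn_gt0.
have eJ : 2 * Q * J * (j + Q - 1) = 2 * j * (N - 1).
  by rewrite hJ; field; rewrite hQ0 hjQ.
have hJQ : 2 * Q * (J + 1) <= 2 * N + Q - 2.
  rewrite -(ler_pM2r hjQp).
  have -> : 2 * Q * (J + 1) * (j + Q - 1) = 2 * j * (N - 1) + 2 * Q * (j + Q - 1).
    by rewrite -eJ; ring.
  have : 0 <= (Q - 1) * (N - Q) by rewrite mulr_ge0 //; lra.
  have : 0 <= j ^+ 2 by rewrite sqr_ge0.
  have e2 : (2 * N + Q - 2) * (j + Q - 1) - (2 * j * (N - 1) + 2 * Q * (j + Q - 1))
     = (Q - 1) * (N - 2) + (Q - 1) * (N - Q) - Q * j by ring.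
  move: e2 hK; lra.
have eGd : Gp N Q a - Gp N Q (J + 1) = (J + 1 - a) * (Q * ((2 * N + Q - 2) - Q * (a + J + 1))).
  by rewrite /Gp; ring.
have : 0 <= (J + 1 - a) * (Q * ((2 * N + Q - 2) - Q * (a + J + 1))).
  apply: mulr_ge0; first lra.
  apply: mulr_ge0; first lra.
  have : Q * a <= Q * (J + 1) by rewrite ler_pM2l //; lra.
  lra.
lra.
Qed.

Lemma basic (N Q j dR J u e : R) :
  2 <= Q -> Q <= N -> 3 <= N -> 0 <= j -> j ^+ 2 + Q * j < (Q - 1) * (N - 2) ->
  dR = N - 1 - (N - 2 + j) / Q ->
  J = j * (N - 1) / (Q * (j + Q - 1)) ->
  u = N - J + e - 1 -> 0 < e -> e <= 1 ->
  [/\ 0 < dR, dR < u & 0 <= J].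
Proof.
move=> hQ hQN hN hj hK hdR hJ hu he0 he1.
have hQ0 : Q != 0 by rewrite gt_eqF //; lra.
have hjQ : j + Q - 1 != 0 by rewrite gt_eqF //; lra.
have hjQp : 0 < j + Q - 1 by lra.
have hQp : 0 < Q by lra.
have eJ : Q * J * (j + Q - 1) = j * (N - 1) by rewrite hJ; field; rewrite hQ0 hjQ.
have edR : Q * dR = Q * N - Q - N + 2 - j by rewrite hdR; field.
have hJ0 : 0 <= J.
  rewrite hJ; apply: divr_ge0; first by apply: mulr_ge0 => //; lra.
  by apply: mulr_ge0; lra.
have hQj : j <= Q * j.
  have : 0 <= (Q - 1) * j by apply: mulr_ge0 => //; lra.
  lra.
have hj2 : 0 <= j ^+ 2 by rewrite sqr_ge0.
have hdR0 : 0 < dR.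
  rewrite -(pmulr_rgt0 _ hQp) edR.
  have : 0 <= (Q - 1) * 1 by lra.
  have e3 : Q * N - Q - N + 2 - j = (Q - 1) * (N - 2) + (Q - 1) * 1 + 1 - j by ring.
  lra.
have hQJ : Q * J <= N - 2 + j.
  rewrite -(ler_pM2r hjQp) eJ.
  have : 0 <= (N - 2) * (Q - 1) by apply: mulr_ge0; lra.
  have : 0 <= j * (Q - 2) by apply: mulr_ge0; lra.
  have e4 : (N - 2 + j) * (j + Q - 1) - j * (N - 1) = (N - 2) * (Q - 1) + j ^+ 2 + j * (Q - 2).
    by ring.
  lra.
split => //.
have : Q * (N - 1 - J) >= Q * dR.
  rewrite edR.
  have e5 : Q * (N - 1 - J) = Q * N - Q - Q * J by ring.
  lra.
rewrite ler_pM2l // => h.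
lra.
Qed.

Lemma signs (N Q j dR J u e mu1 mu2 mu3 : R) :
  2 <= Q -> Q <= N -> 3 <= N -> 0 <= j -> j ^+ 2 + Q * j < (Q - 1) * (N - 2) ->
  dR = N - 1 - (N - 2 + j) / Q ->
  J = j * (N - 1) / (Q * (j + Q - 1)) ->
  u = N - J + e - 1 -> 0 < e -> e <= 1 ->
  mu1 * dR + mu2 * u + mu3 * (u + 1) = mom1 N Q * (1 + mu1 + mu2 + mu3) ->
  mu1 * dR ^+ 2 + mu2 * u ^+ 2 + mu3 * (u + 1) ^+ 2 = mom2 N Q * (1 + mu1 + mu2 + mu3) ->
  mu1 * dR ^+ 3 + mu2 * u ^+ 3 + mu3 * (u + 1) ^+ 3 = mom3 N Q * (1 + mu1 + mu2 + mu3) ->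
  [/\ 0 < 1 + mu1 + mu2 + mu3, 0 <= mu1, 0 <= mu2, 0 <= mu3 & (e = 1 -> mu3 = 0)].
Proof.
move=> hQ hQN hN hj hK hdR hJ hu he0 he1 S1 S2 S3.
have [hdR0 hdRu hJ0] := basic hQ hQN hN hj hK hdR hJ hu he0 he1.
have hQ0 : Q != 0 by rewrite gt_eqF //; lra.
have hjQ : j + Q - 1 != 0 by rewrite gt_eqF //; lra.
have hQp : 0 < Q by lra.
have hN0 : N != 0 by rewrite gt_eqF //; lra.
set L := 1 + mu1 + mu2 + mu3.
set Mz := mom2 N Q - dR * mom1 N Q.
have hMz : 0 < Mz.
  have -> : Mz = N * (Q - 1) * (Q - 1 + j) / Q ^+ 2.
    by rewrite /Mz /mom1 /mom2 hdR; field.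
  apply: divr_gt0; last by rewrite exprn_gt0.
  by apply: mulr_gt0; [apply: mulr_gt0|]; lra.
have eB : forall x, Ecub N Q 0 dR x = Mz * (N - J - x).
  by move=> x; rewrite /Ecub /Mz /mom1 /mom2 /mom3 hdR hJ; field; rewrite hQ0 hjQ.
have eA0 : Ecub N Q dR u (u + 1) * Q ^+ 3 = A0p N Q j (N - u).
  by rewrite /Ecub /mom1 /mom2 /mom3 /A0p hdR; field.
have eAd : Ecub N Q 0 u (u + 1) * Q ^+ 3 = N * (Q - 1) * Gp N Q (N - u).
  by rewrite /Ecub /mom1 /mom2 /mom3 /Gp; field.
have hQ3 : 0 < Q ^+ 3 by rewrite exprn_gt0.
have hA0 : Ecub N Q dR u (u + 1) <= 0.
  rewrite -(pmulr_lle0 _ hQ3) eA0.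
  apply: (A0p_neg hQ hQN hN hj hK hJ); lra.
have hAd : 0 < Ecub N Q 0 u (u + 1).
  rewrite -(pmulr_lgt0 _ hQ3) eAd.
  apply: mulr_gt0; first by apply: mulr_gt0; lra.
  apply: (Gp_pos hQ hQN hN hj hK hJ); lra.
have W0 : L * Ecub N Q dR u (u + 1) = - (dR * u * (u + 1)).
  rewrite -(@wcub _ N Q dR u (u + 1) mu1 mu2 mu3 dR u (u + 1) S1 S2 S3); ring.
have Wd : mu1 * (dR * (u - dR) * (u + 1 - dR)) = L * Ecub N Q 0 u (u + 1).
  rewrite -(@wcub _ N Q dR u (u + 1) mu1 mu2 mu3 0 u (u + 1) S1 S2 S3); ring.
have Wa : mu2 * (u * (u - dR)) = L * (Mz * e).
  have := (@wcub _ N Q dR u (u + 1) mu1 mu2 mu3 0 dR (u + 1) S1 S2 S3).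
  rewrite eB => W.
  have -> : L * (Mz * e) = - (L * (Mz * (N - J - (u + 1)))) by rewrite hu; ring.
  rewrite -W; ring.
have Wb : mu3 * ((u + 1) * (u + 1 - dR)) = L * (Mz * (1 - e)).
  have := (@wcub _ N Q dR u (u + 1) mu1 mu2 mu3 0 dR u S1 S2 S3).
  rewrite eB => W.
  have -> : L * (Mz * (1 - e)) = L * (Mz * (N - J - u)) by rewrite hu; ring.
  rewrite -W; ring.
have hL : 0 < L.
  rewrite ltNge; apply/negP => hl.
  have : 0 <= L * Ecub N Q dR u (u + 1) by rewrite mulr_le0.
  rewrite W0.
  have : 0 < dR * u * (u + 1) by rewrite !mulr_gt0 //; lra.
  lra.
have hu0 : 0 < u by lra.
split => //.
- have hX : 0 < dR * (u - dR) * (u + 1 - dR) by rewrite !mulr_gt0 //; lra.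
  rewrite -(pmulr_lge0 _ hX) Wd.
  by apply: mulr_ge0; apply: ltW.
- have hX : 0 < u * (u - dR) by rewrite !mulr_gt0 //; lra.
  rewrite -(pmulr_lge0 _ hX) Wa.
  by apply: mulr_ge0; [apply: ltW | apply: mulr_ge0; apply: ltW].
- have hX : 0 < (u + 1) * (u + 1 - dR) by rewrite !mulr_gt0 //; lra.
  rewrite -(pmulr_lge0 _ hX) Wb.
  apply: mulr_ge0; first exact: ltW.
  apply: mulr_ge0; [exact: ltW | lra].
- move=> e1.
  have hX : (u + 1) * (u + 1 - dR) != 0 by rewrite gt_eqF // !mulr_gt0 //; lra.
  apply/eqP; rewrite -(mulIr_eq0 _ (mulIf hX)) Wb e1 subrr !mulr0 //.
Qed.
End H.

Section K.
Variable R : realType.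
Variables n q : nat.
Hypothesis hq : (1 <= q)%N.

Lemma Pl1 (z : R) : kraw n q 1 z / rr R n q 1 = P1f n%:R q%:R z.
Proof. by rewrite kraw1 rr1 /P1f natrB. Qed.
Lemma Pl2 (z : R) : (2 <= n)%N -> kraw n q 2 z / rr R n q 2 = P2f n%:R q%:R z.
Proof. by move=> h; rewrite kraw2 rr2 // /P2f natrB. Qed.
Lemma Pl3 (z : R) : (3 <= n)%N -> kraw n q 3 z / rr R n q 3 = P3f n%:R q%:R z.
Proof. by move=> h; rewrite kraw3 rr3 // /P3f natrB. Qed.

Lemma Qpol_t i (z : R) : n%:R != 0 :> R ->
  Qpol n q i (1 - 2 * z / n%:R) = kraw n q i z / rr R n q i.
Proof.
move=> hN; rewrite /Qpol.
have -> : (n%:R * (1 - (1 - 2 * z / n%:R)) / 2) = z by field.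
by [].
Qed.

Lemma Qpol1 i : (2 <= q)%N -> (i <= n)%N -> Qpol n q i (1 : R) = 1.
Proof.
move=> h2 hi; rewrite /Qpol subrr mulr0 mul0r kraw_at0 // divff //.
exact: rr_neq0.
Qed.

Lemma comb_sum (M : nat) (c : nat -> R) (mu1 mu2 mu3 x1 x2 x3 : R) :
  (2 <= q)%N -> (M <= n)%N -> n%:R != 0 :> R ->
  \sum_(i < M.+1) c i * Qpol n q i 1
  + mu1 * \sum_(i < M.+1) c i * Qpol n q i (1 - 2 * x1 / n%:R)
  + mu2 * \sum_(i < M.+1) c i * Qpol n q i (1 - 2 * x2 / n%:R)
  + mu3 * \sum_(i < M.+1) c i * Qpol n q i (1 - 2 * x3 / n%:R)
  = \sum_(i < M.+1) c i * (1 + mu1 * (kraw n q i x1 / rr R n q i)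
        + mu2 * (kraw n q i x2 / rr R n q i) + mu3 * (kraw n q i x3 / rr R n q i)).
Proof.
move=> h2 hM hN.
rewrite !mulr_sumr -!big_split /=; apply: eq_bigr => i _.
rewrite !Qpol_t // Qpol1 //; last by rewrite (leq_trans _ hM) // -ltnS.
ring.
Qed.

Lemma inTn_node (x : R) (z : int) : x = z%:~R -> 0 <= x -> x <= n%:R -> (0 < n)%N ->
  inTn n (1 - 2 * x / n%:R).
Proof.
move=> -> ; case: z => [zn | zn] hz0 hzn hn.
- have ez : (Posz zn)%:~R = zn%:R :> R by [].
  rewrite ez in hzn *.
  have hzn' : (zn <= n)%N by rewrite -(ler_nat R).
  exists (n - zn)%N; first exact: leq_subr.
  rewrite natrB //.
  have hN : n%:R != 0 :> R by rewrite pnatr_eq0 -lt0n.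
  by field.
- exfalso; move: hz0; rewrite NegzE intrN.
  have : 0 < (zn.+1)%:~R :> R by rewrite ltr0z.
  lra.
Qed.
End K.

Lemma t_bounds (R : realType) (N x y : R) : 0 < N -> x <= N -> y <= x ->
  -1 <= 1 - 2 * x / N /\ 1 - 2 * x / N <= 1 - 2 * y / N.
Proof.
move=> hN hx hy.
have a1 : x / N <= 1 by rewrite ler_pdivrMr // mul1r.
have a2 : y / N <= x / N by rewrite ler_pM2r // invr_gt0.
rewrite -!mulrA; split; lra.
Qed.

End Helpers.
Import Helpers.

Theorem theorem4 (R : realType) (n q : nat) (d : int) (j s d0 e : R)
    (fc : nat -> R) (mu1 mu2 mu3 : R) :
  (2 <= q)%N -> (q <= n)%N ->
  (* j is defined by d = n - 1 - (n - 2 + j)/q *)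
  d%:~R = n%:R - 1 - (n%:R - 2 + j) / q%:R ->
  0 <= j -> j < (Num.sqrt (q%:R ^+ 2 + 4 * (q%:R - 1) * (n%:R - 2)) - q%:R) / 2 ->
  s = 1 - 2 * d%:~R / n%:R ->
  d0 = n%:R - j * (n%:R - 1) / (q%:R * (j + q%:R - 1)) ->
  (* e is the unique number in (0,1] with d0 + e integral *)
  0 < e -> e <= 1 -> (exists k : int, d0 + e = k%:~R) ->
  (* f = sum_{i=0}^3 f_i Q_i *)
  (forall t : R,
     (t + 1 + 2 * e / n%:R - 2 * j * (n%:R - 1) / (n%:R * q%:R * (j + q%:R - 1)))
     * (t + 1 + 2 * (e - 1) / n%:R - 2 * j * (n%:R - 1) / (n%:R * q%:R * (j + q%:R - 1)))
     * (t - s)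
     = \sum_(i < 4) fc i * Qpol n q i t) ->
  (* (mu_d, mu_{d0+e-1}, mu_{d0+e}) solves the linear system *)
  (forall l : nat, (1 <= l <= 3)%N ->
     mu1 * (kraw n q l d%:~R / rr R n q l)
     + mu2 * (kraw n q l (d0 + e - 1) / rr R n q l)
     + mu3 * (kraw n q l (d0 + e) / rr R n q l) = -1) ->
  (* lambda_i^* >= 0 for 4 <= i <= n *)
  (forall i : nat, (4 <= i <= n)%N ->
     0 <= 1 + mu1 * (kraw n q i d%:~R / rr R n q i)
          + mu2 * (kraw n q i (d0 + e - 1) / rr R n q i)
          + mu3 * (kraw n q i (d0 + e) / rr R n q i)) ->
  forall (m : nat) (h : nat -> R),
    (m <= n)%N ->
    0 < h 0%N ->
    (forall i : nat, (i <= m)%N -> 0 <= h i) ->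
    (forall t : R, inTn n t -> -1 <= t -> t <= s ->
       \sum_(i < m.+1) h i * Qpol n q i t <= 0) ->
    (\sum_(i < m.+1) h i * Qpol n q i 1) / h 0%N >=
    ((1 + 1 + 2 * e / n%:R - 2 * j * (n%:R - 1) / (n%:R * q%:R * (j + q%:R - 1)))
     * (1 + 1 + 2 * (e - 1) / n%:R - 2 * j * (n%:R - 1) / (n%:R * q%:R * (j + q%:R - 1)))
     * (1 - s)) / fc 0%N.
Proof.
move=> hq hqn Hd hj hjS Hs Hd0 he0 he1 [k Hk] Hf Hsys Hlam m h hm hh0 hhi hneg.
have hQ : 2 <= q%:R :> R by rewrite ler_nat.
have hQN : q%:R <= n%:R :> R by rewrite ler_nat.
have hq1 : (1 <= q)%N by apply: leq_trans hq.
set S := q%:R ^+ 2 + 4 * (q%:R - 1) * (n%:R - 2) : R.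
have hS0 : 0 <= S.
  rewrite /S; have : 0 <= (q%:R - 1) * (n%:R - 2) :> R by apply: mulr_ge0; lra.
  have : 0 <= q%:R ^+ 2 :> R by rewrite sqr_ge0.
  lra.
have hK : j ^+ 2 + q%:R * j < (q%:R - 1) * (n%:R - 2) :> R.
  have h1 : 2 * j + q%:R < Num.sqrt S by lra.
  have h2 : (2 * j + q%:R) * (2 * j + q%:R) < Num.sqrt S * Num.sqrt S.
    apply: ltr_pM => //; lra.
  move: h2; rewrite -[Num.sqrt S * _]expr2 sqr_sqrtr // /S => h2.
  have e2 : (2 * j + q%:R) * (2 * j + q%:R) = 4 * (j ^+ 2 + q%:R * j) + q%:R ^+ 2 :> R by ring.
  lra.
have hN3 : 3 <= n%:R :> R.
  have : 0 < (q%:R - 1) * (n%:R - 2) :> R.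
    have : 0 <= j ^+ 2 by rewrite sqr_ge0.
    have : 0 <= q%:R * j :> R by apply: mulr_ge0; lra.
    lra.
  rewrite pmulr_rgt0; last by lra.
  move=> h2.
  have : (2 < n)%N by rewrite -(ltr_nat R); lra.
  by rewrite -(ler_nat R) => ->.
have hn3 : (3 <= n)%N by rewrite -(ler_nat R).
have hn2 : (2 <= n)%N by apply: ltnW.
have hn0 : (0 < n)%N by apply: leq_trans hn2.
have hN0 : n%:R != 0 :> R by rewrite gt_eqF //; lra.
have hNp : 0 < n%:R :> R by lra.
have H1 := Hsys 1%N isT.
have H2 := Hsys 2%N isT.
have H3 := Hsys 3%N isT.
rewrite !Pl1 // in H1.
rewrite !Pl2 // in H2.
rewrite !Pl3 // in H3.
have [S1 S2 S3] := moments (N := n%:R) (Q := q%:R) (x1 := d%:~R) (x2 := d0 + e - 1) (x3 := d0 + e)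
   hN0 ltac:(rewrite gt_eqF //; lra) ltac:(rewrite gt_eqF //; lra)
   ltac:(rewrite gt_eqF //; lra) ltac:(rewrite gt_eqF //; lra) H1 H2 H3.
have [u hu] : exists u, u = d0 + e - 1 by eexists.
have hv : d0 + e = u + 1 by rewrite hu subrK.
rewrite -hu hv in S1 S2 S3.
set J := j * (n%:R - 1) / (q%:R * (j + q%:R - 1)).
have hu' : u = n%:R - J + e - 1 by rewrite hu Hd0.
have [hL hmu1 hmu2 hmu3 hmu3e] :=
  signs hQ hQN hN3 hj hK Hd (erefl J) hu' he0 he1 S1 S2 S3.
have [hdR0 hdRu hJ0] := basic hQ hQN hN3 hj hK Hd (erefl J) hu' he0 he1.
pose L := 1 + mu1 + mu2 + mu3.
pose lam := fun i : nat => 1 + mu1 * (kraw n q i d%:~R / rr R n q i)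
  + mu2 * (kraw n q i (d0 + e - 1) / rr R n q i) + mu3 * (kraw n q i (d0 + e) / rr R n q i).
have lam0 : lam 0%N = L by rewrite /lam /L !kraw0 rr0 !divr1 !mulr1.
have lam13 : forall i : nat, (1 <= i <= 3)%N -> lam i = 0.
  by move=> i hi; have := Hsys i hi; rewrite /lam => H; lra.
have lamge : forall i : nat, (1 <= i <= n)%N -> 0 <= lam i.
  move=> i /andP [hi1 hin].
  case: (leqP i 3) => hi3; first by rewrite lam13 // hi1 hi3.
  by rewrite /lam; apply: Hlam; rewrite hin andbT.
have hukR : d0 + e - 1 = (k - 1)%:~R by rewrite intrB Hk.
have hJN : u <= n%:R by lra.
have tD := t_bounds hNp (x := d%:~R) (y := d%:~R) ltac:(lra) (lexx _).
have tU := t_bounds hNp (x := d0 + e - 1) (y := d%:~R) ltac:(lra) ltac:(lra).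
have nD : \sum_(i < m.+1) h i * Qpol n q i (1 - 2 * d%:~R / n%:R) <= 0.
  apply: hneg; first by apply: (inTn_node (z := d)) => //; lra.
    by case: tD.
  by rewrite Hs; case: tD.
have nU : \sum_(i < m.+1) h i * Qpol n q i (1 - 2 * (d0 + e - 1) / n%:R) <= 0.
  apply: hneg; first by apply: (inTn_node (z := k - 1)) => //; lra.
    by case: tU.
  by rewrite Hs; case: tU.
have nV : mu3 * \sum_(i < m.+1) h i * Qpol n q i (1 - 2 * (d0 + e) / n%:R) <= 0.
  case: (lerP (u + 1) n%:R) => hv1.
    have tV := t_bounds hNp (x := d0 + e) (y := d%:~R) ltac:(lra) ltac:(lra).
    apply: mulr_ge0_le0 => //.
    apply: hneg; first by apply: (inTn_node (z := k)) => //; lra.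
      by case: tV.
    by rewrite Hs; case: tV.
  have : (n%:Z < k)%R by rewrite -(ltr_int R) -Hk hv.
  rewrite -lezD1 -(ler_int R) intrD -Hk => hk1.
  by rewrite hmu3e ?mul0r //; lra.
have Ch := @comb_sum R n q m h mu1 mu2 mu3 d%:~R (d0 + e - 1) (d0 + e) hq hm hN0.
have Hge : h 0%N * L <= \sum_(i < m.+1) h i * lam i.
  rewrite big_ord_recl /= -/(lam 0%N) lam0 -[X in X <= _]addr0 lerD2l.
  apply: sumr_ge0 => i _; apply: mulr_ge0.
    apply: hhi; rewrite /bump /= add1n; exact: ltn_ord.
  apply: lamge; rewrite /bump /= add1n /=.
  exact: leq_trans (ltn_ord i) hm.
have hs1 : h 0%N * L <= \sum_(i < m.+1) h i * Qpol n q i 1.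
  have e1 : \sum_(i < m.+1) h i * lam i = \sum_(i < m.+1) h i * (1 + mu1 * (kraw n q i d%:~R / rr R n q i)
        + mu2 * (kraw n q i (d0 + e - 1) / rr R n q i) + mu3 * (kraw n q i (d0 + e) / rr R n q i)) by [].
  rewrite e1 -Ch in Hge.
  have : mu1 * \sum_(i < m.+1) h i * Qpol n q i (1 - 2 * d%:~R / n%:R) <= 0 by apply: mulr_ge0_le0.
  have : mu2 * \sum_(i < m.+1) h i * Qpol n q i (1 - 2 * (d0 + e - 1) / n%:R) <= 0 by apply: mulr_ge0_le0.
  lra.
pose f := fun t : R =>
     (t + 1 + 2 * e / n%:R - 2 * j * (n%:R - 1) / (n%:R * q%:R * (j + q%:R - 1)))
     * (t + 1 + 2 * (e - 1) / n%:R - 2 * j * (n%:R - 1) / (n%:R * q%:R * (j + q%:R - 1)))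
     * (t - s).
have Hf' : forall t, f t = \sum_(i < 4) fc i * Qpol n q i t := Hf.
have Cf := @comb_sum R n q 3 fc mu1 mu2 mu3 d%:~R (d0 + e - 1) (d0 + e) hq hn3 hN0.
rewrite -!Hf' in Cf.
have hQ0 : q%:R != 0 :> R by rewrite gt_eqF //; lra.
have hjQ : j + q%:R - 1 != 0 :> R by rewrite gt_eqF //; lra.
have fD : f (1 - 2 * d%:~R / n%:R) = 0 by rewrite /f Hs subrr mulr0.
have fU : f (1 - 2 * (d0 + e - 1) / n%:R) = 0.
  rewrite /f; set t := 1 - 2 * (d0 + e - 1) / n%:R.
  have -> : t + 1 + 2 * (e - 1) / n%:R - 2 * j * (n%:R - 1) / (n%:R * q%:R * (j + q%:R - 1)) = 0.
    by rewrite /t Hd0 /J; field; rewrite hQ0 hN0 hjQ.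
  by rewrite mulr0 mul0r.
have fV : f (1 - 2 * (d0 + e) / n%:R) = 0.
  rewrite /f; set t := 1 - 2 * (d0 + e) / n%:R.
  have -> : t + 1 + 2 * e / n%:R - 2 * j * (n%:R - 1) / (n%:R * q%:R * (j + q%:R - 1)) = 0.
    by rewrite /t Hd0 /J; field; rewrite hQ0 hN0 hjQ.
  by rewrite !mul0r.
rewrite fD fU fV !mulr0 !addr0 in Cf.
have Ef1 : f 1 = fc 0%N * L.
  rewrite Cf big_ord_recl /= -/(lam 0%N) lam0 big1 ?addr0 // => i _.
  rewrite -/(lam _) lam13 ?mulr0 //.
  by case: i => i hi; rewrite /bump /= add1n.
have f1pos : 0 < f 1.
  have -> : f 1 = 8 * (u + 1) * u * d%:~R / n%:R ^+ 3.
    by rewrite /f Hs hu Hd0 /J; field; rewrite hQ0 hN0 hjQ.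
  apply: divr_gt0; last by rewrite exprn_gt0.
  by rewrite !mulr_gt0 //; lra.
have hfc : 0 < fc 0%N.
  by move: f1pos; rewrite Ef1 pmulr_lgt0.
change (f 1 / fc 0%N <= (\sum_(i < m.+1) h i * Qpol n q i 1) / h 0%N).
rewrite Ef1 mulrAC divff ?gt_eqF // mul1r ler_pdivlMr // mulrC.
exact: hs1.
Qed.
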